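(* Let $G=(V,E)$ be a finite undirected simple graph with an even number of vertices, and let $\mathrm{perfmat}\, G$ denote the number of perfect matchings of $G$. Then $$\mathrm{perfmat}\, G \le \prod_{v\in V} \big((\deg v)!\big)^{\frac{1}{2\deg v}},$$ with the convention $0^{1/0}=0$ (so the right-hand side is $0$ if some vertex has degree $0$). Equivalently, for every symmetric matrix $A\in\{0,1\}^{2n\times 2n}$ with zero diagonal and row sums $r_1,\dots,r_{2n}$, $$\mathrm{hafn}\, A \le \prod_{i=1}^{2n} (r_i!)^{\frac{1}{2r_i}}.$$
   Context: For a real symmetric $2n\times 2n$ matrix $A=[a_{ij}]$, the hafnian is $\mathrm{hafn}\, A=\sum \prod_{k=1}^n a_{i_kj_k}$, where the sum runs over all partitions $\{\{i_1,j_1\},\dots,\{i_n,j_n\}\}$ of $\{1,\dots,2n\}$ into $n$ pairs (with $i_k<j_k$), i.e. over all perfect matchings of the complete graph $K_{2n}$. For the adjacency matrix $A(G)$ of a graph $G$ on vertex set $\{1,\dots,2n\}$, $\mathrm{hafn}\,A(G)=\mathrm{perfmat}\,G$, and the $i$-th row sum $r_i$ is $\deg i$. *)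

(* Defs.v *)
(* Reals are represented in algC (algebraic complex numbers);
   (d!)^(1/(2d)) is the nonnegative real (2d)-th root of d!, i.e. (2d).-root d!. *)
From HB Require Import structures.
From mathcomp Require Import all_boot all_order all_algebra all_field.
Set Implicit Arguments. Unset Strict Implicit. Unset Printing Implicit Defensive.
Import Order.TTheory GRing.Theory Num.Theory.

Definition simple_graph (T : finType) (e : rel T) : Prop :=
  symmetric e /\ irreflexive e.

Definition deg (T : finType) (e : rel T) (v : T) : nat := #|[set w | e v w]|.

Definition perfect_matching (T : finType) (e : rel T) (M : {set {set T}}) : bool :=
  partition M [set: T] &&
  [forall B in M, exists x, exists y, e x y && (B == [set x; y])].

Definition perfmat (T : finType) (e : rel T) : nat :=
  #|[set M : {set {set T}} | perfect_matching e M]|.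

Local Open Scope ring_scope.

Definition bregman_factor (d : nat) : algC :=
  if d == 0%N then 0 else (d.*2).-root (d`!)%:R.

(* Main.v *)
Require Import Defs.
From HB Require Import structures.
From mathcomp Require Import all_boot all_order all_fingroup all_algebra all_field.
Import Order.TTheory GRing.Theory Num.Theory.
Local Open Scope ring_scope.

Lemma card_ltord (M a : nat) : (a <= M)%N -> #|[pred m : 'I_M | (m < a)%N]| = a.
Proof.
move=> H; rewrite -sum1_card (eq_bigl (fun i : 'I_M => (i < a)%N)) //.
rewrite (big_ord_narrow H).
by rewrite sum_nat_const card_ord muln1.
Qed.

Lemma pair_prod (I : finType) (A : {pred I}) (t : I -> nat) M (F : I -> algC) :
  (forall k, k \in A -> t k <= M)%N ->
  \prod_(p in [pred p : I * 'I_M | (p.1 \in A) && (p.2 < t p.1)%N]) F p.1 = \prod_(k in A) F k ^+ t k.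
Proof.
move=> Ht; rewrite (eq_bigl (fun p : I * 'I_M => (p.1 \in A) && (p.2 < t p.1)%N)) //.
rewrite -(pair_big_dep (fun k => k \in A) (fun k (m : 'I_M) => (m < t k)%N) (fun k _ => F k)).
apply: eq_bigr => k kA.
by rewrite (prodr_const [pred m : 'I_M | (m < t k)%N]) card_ltord ?Ht.
Qed.

Lemma pair_sum (I : finType) (A : {pred I}) (t : I -> nat) M (F : I -> algC) :
  (forall k, k \in A -> t k <= M)%N ->
  \sum_(p in [pred p : I * 'I_M | (p.1 \in A) && (p.2 < t p.1)%N]) F p.1 = \sum_(k in A) F k *+ t k.
Proof.
move=> Ht; rewrite (eq_bigl (fun p : I * 'I_M => (p.1 \in A) && (p.2 < t p.1)%N)) //.
rewrite -(pair_big_dep (fun k => k \in A) (fun k (m : 'I_M) => (m < t k)%N) (fun k _ => F k)).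
apply: eq_bigr => k kA.
by rewrite (sumr_const [pred m : 'I_M | (m < t k)%N]) card_ltord ?Ht.
Qed.

Lemma pair_card (I : finType) (A : {pred I}) (t : I -> nat) M :
  (forall k, k \in A -> t k <= M)%N ->
  #|[pred p : I * 'I_M | (p.1 \in A) && (p.2 < t p.1)%N]| = (\sum_(k in A) t k)%N.
Proof.
move=> Ht; rewrite -sum1_card.
rewrite -(pair_big_dep (fun k => k \in A) (fun k (m : 'I_M) => (m < t k)%N) (fun k _ => 1%N)).
apply: eq_bigr => k kA.
by rewrite (sum1_card [pred m : 'I_M | (m < t k)%N]) card_ltord ?Ht.
Qed.

Lemma amgm (I : finType) (A : {pred I}) (t : I -> nat) :
  ((\sum_(k in A) t k) ^ (\sum_(k in A) t k) <=
     #|A| ^ (\sum_(k in A) t k) * \prod_(k in A) t k ^ t k)%N.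
Proof.
set T := (\sum_(k in A) t k)%N.
have Ppos : (0 < \prod_(k in A) t k ^ t k)%N.
  by apply: prodn_gt0 => k; rewrite expn_gt0; case: (t k).
have [T0|Tpos] := posnP T.
  by rewrite T0 !expn0 mul1n.
have rpos : (0 < #|A|)%N.
  rewrite lt0n; apply/negP => /eqP/card0_eq A0.
  by move: Tpos; rewrite /T big_pred0 // => k; rewrite A0.
have tle : forall k, k \in A -> (t k <= T.+1)%N.
  move=> k kA; rewrite ltnW // ltnS /T (bigD1 k) //=; exact: leq_addr.
rewrite -(ler_nat algC) natrM !natrX natr_prod.
set c : algC := T%:R / #|A|%:R.
have c0 : 0 <= c by rewrite divr_ge0 ?ler0n.
have AG := leif_AGM (A := [pred p : I * 'I_T.+1 | (p.1 \in A) && (p.2 < t p.1)%N])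
   (E := fun p => c / (t p.1)%:R) (fun p _ => divr_ge0 c0 (ler0n _ _)).
move: AG => /(fun h => h.1) AG.
rewrite (@pair_card _ _ _ T.+1) // (@pair_prod _ _ _ _ (fun k => c / (t k)%:R)) // (@pair_sum _ _ _ _ (fun k => c / (t k)%:R)) // -/T in AG.
have Tr : (T%:R : algC) != 0 by rewrite pnatr_eq0 -lt0n.
have rr : (#|A|%:R : algC) != 0 by rewrite pnatr_eq0 -lt0n.
have Sle : \sum_(k in A) c / (t k)%:R *+ t k <= T%:R.
  apply: (@le_trans _ _ (\sum_(k in A) c)).
    apply: ler_sum => k _; case: (posnP (t k)) => [->|tp]; first by rewrite mulr0n.
    by rewrite -[_ *+ t k]mulr_natr divfK // pnatr_eq0 -lt0n.
  by rewrite sumr_const -[_ *+ #|A|]mulr_natr divfK.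
have mu1 : ((\sum_(k in A) c / (t k)%:R *+ t k) / T%:R) ^+ T <= 1.
  apply: exprn_ile1.
    by rewrite divr_ge0 // sumr_ge0 // => k _; rewrite mulrn_wge0 // divr_ge0.
  by rewrite ler_pdivrMr ?mul1r // ltr0n.
have := le_trans AG mu1.
under eq_bigr do rewrite expr_div_n.
rewrite prodf_div.
have -> : \prod_(i in A) c ^+ t i = c ^+ T.
  by rewrite /T (big_morph (fun n => c ^+ n) (exprD c) (expr0 c)).
have Pp : 0 < \prod_(i in A) (t i)%:R ^+ t i :> algC.
  by rewrite -(ltr_nat algC) natr_prod in Ppos; under eq_bigr do rewrite -natrX.
rewrite ler_pdivrMr // mul1r /c expr_div_n ler_pdivrMr ?exprn_gt0 ?ltr0n //.
by rewrite mulrC; under [X in _ -> _ <= _ * X]eq_bigr do rewrite natrX.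
Qed.

Set Implicit Arguments. Unset Strict Implicit. Unset Printing Implicit Defensive.

Definition Sset (T : finType) (R : rel T) : {set {perm T}} :=
  [set s : {perm T} | [forall i, R i (s i)]].
Definition per (T : finType) (R : rel T) := #|Sset R|.
Definition rs (T : finType) (R : rel T) (i : T) := #|[set j | R i j]|.
Definition bb (r : nat) : algC := if r == 0%N then 0 else r.-root (r`!)%:R.
Definition Rf (T : finType) (R : rel T) (i k : T) : rel T :=
  fun j l => if j == i then l == k else R j l && (l != k).
Definition noniso (T : finType) (R : rel T) (i k : T) :=
  R i k && ~~ ((rs R i == 1%N) && [forall j, R j k ==> (j == i)]).
Definition meas (T : finType) (R : rel T) := #|[set p : T * T | noniso R p.1 p.2]|.
Definition Jset (T : finType) (R : rel T) := [set i | [exists k, noniso R i k]].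

Lemma bb_ge0 r : 0 <= bb r.
Proof. by rewrite /bb; case: eqP => // /eqP; rewrite -lt0n => h; rewrite rootC_ge0 // ler0n. Qed.

Lemma bb1 : bb 1 = 1.
Proof. by rewrite /bb /= root1C. Qed.

Lemma bbX r : bb r ^+ r = (r`!)%:R.
Proof. by rewrite /bb; case: eqP => [->|/eqP]; rewrite ?expr0 // -lt0n => h; rewrite rootCK. Qed.

Lemma SsetP (T : finType) (R : rel T) s : (s \in Sset R) = [forall i, R i (s i)].
Proof. by rewrite inE. Qed.

Lemma rs_Rf (T : finType) (R : rel T) i k j :
  rs (Rf R i k) j = if j == i then 1%N else (rs R j - R j k)%N.
Proof.
rewrite /rs /Rf; case: (j =P i) => [_|jni].
  have -> : [set l | l == k] = [set k] by apply/setP => l; rewrite !inE.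
  exact: cards1.
rewrite (cardsD1 k [set l | R j l]) inE addKn.
by apply: eq_card => l; rewrite !inE andbC.
Qed.

Lemma S_Rf (T : finType) (R : rel T) i k : R i k ->
  Sset (Rf R i k) = [set s in Sset R | s i == k].
Proof.
move=> Rik; apply/setP => s; rewrite !inE.
apply/idP/idP => [/forallP H|/andP[/forallP H /eqP ski]].
  have ski := (H i); rewrite /Rf eqxx in ski.
  rewrite ski andbT; apply/forallP => j; have := H j; rewrite /Rf.
  by case: eqP => [->|_ /andP[]//]; rewrite (eqP ski).
apply/forallP => j; rewrite /Rf; case: eqP => [->|/eqP jni]; first by rewrite ski.
by rewrite H /= -ski (inj_eq perm_inj).
Qed.

Lemma per_sum (T : finType) (R : rel T) i :
  per R = (\sum_(k in [set k | R i k]) per (Rf R i k))%N.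
Proof.
rewrite /per -sum1_card (partition_big (fun s : {perm T} => s i) (mem [set k | R i k])).
  apply: eq_bigr => k /[!inE] Rik; rewrite S_Rf // -sum1_card.
  by apply: eq_bigl => s; rewrite !inE.
by move=> s; rewrite !inE => /forallP ->.
Qed.

Lemma per_prod (T : finType) (R : rel T) i (F : T -> algC) :
  \prod_(s in Sset R) F (s i) = \prod_(k in [set k | R i k]) F k ^+ per (Rf R i k).
Proof.
rewrite (partition_big (fun s : {perm T} => s i) (mem [set k | R i k])).
  apply: eq_bigr => k /[!inE] Rik; rewrite /per S_Rf //.
  rewrite -prodr_const; apply: eq_big => s; first by rewrite !inE.
  by rewrite !inE => /andP[_ /eqP ->].
by move=> s; rewrite !inE => /forallP ->.
Qed.

Lemma row1 (T : finType) (R : rel T) j a b : rs R j = 1%N -> R j a -> R j b -> a = b.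
Proof.
move=> /eqP/cards1P[x Hx] Ra Rb.
have : a \in [set l | R j l] by rewrite inE.
have : b \in [set l | R j l] by rewrite inE.
by rewrite Hx !inE => /eqP -> /eqP ->.
Qed.

Lemma Rf_sub (T : finType) (R : rel T) i k j l : R i k -> Rf R i k j l -> R j l.
Proof. by rewrite /Rf; case: eqP => [-> Rik /eqP ->|_ _ /andP[]]. Qed.

Lemma meas_Rf (T : finType) (R : rel T) i k : noniso R i k -> (meas (Rf R i k) < meas R)%N.
Proof.
move=> nik; have Rik : R i k by case/andP: nik.
apply: proper_card; apply/properP; split.
  apply/subsetP => [[j l]]; rewrite !inE /= => /andP[Rfjl H].
  have Rjl := Rf_sub Rik Rfjl; rewrite /noniso Rjl /=.
  apply: contra H => /andP[/eqP r1 /forallP col]; apply/andP; split.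
    rewrite rs_Rf; case: (j =P i) => [//|/eqP jni].
    have Rjk : R j k = false.
      apply/negP => Rjk; have lk := row1 r1 Rjl Rjk.
      by move: Rfjl; rewrite /Rf (negbTE jni) lk eqxx andbF.
    by rewrite Rjk subn0 r1.
  apply/forallP => j'; apply/implyP => Rf'; exact: (implyP (col j') (Rf_sub Rik Rf')).
exists (i, k); first by rewrite inE.
rewrite inE /= /noniso negb_and negbK; apply/orP; right.
rewrite rs_Rf eqxx /=; apply/forallP => j'; rewrite /Rf.
by case: eqP => //= _; rewrite ?implybT // eqxx andbF.
Qed.

Lemma isoP (T : finType) (R : rel T) s i : s \in Sset R -> i \notin Jset R ->
  rs R i = 1%N /\ (forall j, R j (s i) -> j = i).
Proof.
rewrite SsetP inE => /forallP Hs /existsPn /(_ (s i)).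
rewrite /noniso Hs /= negbK => /andP[/eqP r1 /forallP col]; split => // j Rj.
by apply/eqP; exact: (implyP (col j) Rj).
Qed.

Lemma prod_constP (I : finType) (P : pred I) (x : algC) :
  \prod_(i | P i) x = x ^+ #|[set i | P i]|.
Proof. by rewrite -prodr_const; apply: eq_bigl => i; rewrite inE. Qed.

Lemma rs_pos (T : finType) (R : rel T) s j : s \in Sset R -> (0 < rs R j)%N.
Proof. by rewrite SsetP => /forallP H; apply/card_gt0P; exists (s j); rewrite inE. Qed.

Lemma step4 (T : finType) (R : rel T) s : s \in Sset R ->
  \prod_(i in Jset R) ((rs R i)%:R * \prod_j bb (rs (Rf R i (s i)) j)) =
  (\prod_(j in Jset R) bb (rs R j)) ^+ #|Jset R|.
Proof.
move=> sS; have Hs := sS; rewrite SsetP in Hs; move/forallP: Hs => Hs.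
set J := Jset R; set N := #|J|.
rewrite big_split /= [X in _ * X]exchange_big /=.
have Cj : forall j, \prod_(i in J) bb (rs (Rf R i (s i)) j) =
   if j \in J then bb (rs R j).-1 ^+ (rs R j).-1 * bb (rs R j) ^+ (N - rs R j) else 1.
  move=> j; case: ifP => jJ; last first.
    apply: big1 => i iJ; rewrite rs_Rf.
    have jni : (j == i) = false by apply/eqP => ji; rewrite ji iJ in jJ.
    have [r1 _] := isoP sS (negbT jJ).
    have -> : R j (s i) = false.
      apply/negP => Rji; have := row1 r1 (Hs j) Rji => /perm_inj ji.
      by rewrite ji eqxx in jni.
    by rewrite jni r1 bb1.
  rewrite (bigD1 j) //= rs_Rf eqxx bb1 mul1r.
  have -> : \prod_(i | (i \in J) && (i != j)) bb (rs (Rf R i (s i)) j) =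
            \prod_(i in J :\ j) bb (rs R j - R j (s i)).
    apply: eq_big => i; first by rewrite !inE andbC.
    by move=> /andP[_ ij]; rewrite rs_Rf eq_sym (negbTE ij).
  rewrite (bigID (fun i => R j (s i))) /=.
  have -> : \prod_(i in J :\ j | R j (s i)) bb (rs R j - R j (s i)) =
            \prod_(i | i \in (J :\ j) :&: [set i | R j (s i)]) bb (rs R j).-1.
    apply: eq_big => i; first by rewrite !inE.
    by move=> /andP[_ ->]; rewrite subn1.
  have -> : \prod_(i in J :\ j | ~~ R j (s i)) bb (rs R j - R j (s i)) =
            \prod_(i | i \in (J :\ j) :\: [set i | R j (s i)]) bb (rs R j).
    apply: eq_big => i; first by rewrite !inE; case: (R j (s i)); rewrite ?andbF ?andbT.
    by move=> /andP[_ /negbTE ->]; rewrite subn0.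
  rewrite !prod_constP.
  have c1E : #|[set i | i \in (J :\ j) :&: [set i | R j (s i)]]| = (rs R j).-1.
    have -> : [set i | i \in (J :\ j) :&: [set i | R j (s i)]] =
              s @^-1: ([set l | R j l] :\ s j).
      apply/setP => i; rewrite !inE (inj_eq perm_inj).
      case: (i =P j) => [->|/eqP ij] //=.
      case Rji: (R j (s i)); rewrite ?andbF // andbT.
      suff : i \in J by rewrite inE.
      apply: contraT => iJ.
      have [_ col] := isoP sS iJ.
      by move: ij; rewrite (col j Rji) eqxx.
    rewrite card_preimset; last exact: perm_inj.
    by rewrite /rs (cardsD1 (s j) [set l | R j l]) inE Hs.
  have c0E : (#|[set i | i \in (J :\ j) :\: [set i | R j (s i)]]| + (rs R j).-1 = N.-1)%N.
    rewrite -c1E addnC.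
    have e1 : forall A : {set T}, [set i | i \in A] = A by move=> A; apply/setP => i; rewrite inE.
    rewrite !e1 cardsID.
    by rewrite /N (cardsD1 j J) jJ.
  have rp := rs_pos j sS.
  have Np : (0 < N)%N by apply/card_gt0P; exists j.
  rewrite c1E; congr (_ * _ ^+ _).
  by rewrite -[N]prednK // -[rs R j]prednK // subSS -c0E addnK.
under [X in _ * X = _]eq_bigr do rewrite Cj.
rewrite -big_mkcond /= -big_split /= -prodrXl.
apply: eq_bigr => j jJ; rewrite mulrA.
have rp := rs_pos j sS.
have rN : (rs R j <= N)%N.
  rewrite /rs -(card_preimset [set l | R j l] (@perm_inj _ s)).
  apply: subset_leq_card; apply/subsetP => i Hi.
  have Rji : R j (s i) by rewrite !inE in Hi.
  apply: contraT => iJ; have [_ col] := isoP sS iJ.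
  by move: iJ; rewrite -(col j Rji) jJ.
have -> : (rs R j)%:R * bb (rs R j).-1 ^+ (rs R j).-1 = bb (rs R j) ^+ rs R j.
  by rewrite !bbX -natrM -[in RHS](prednK rp) factS prednK.
by rewrite -exprD subnKC.
Qed.

Lemma nonisoJ (T : finType) (R : rel T) s i : s \in Sset R -> i \in Jset R -> noniso R i (s i).
Proof.
rewrite SsetP => /forallP Hs; rewrite inE => /existsP[k nk].
rewrite /noniso Hs /=; apply/negP => /andP[/eqP r1 col].
move: nk; rewrite /noniso; case/andP => Rik; rewrite r1 eqxx /=.
by rewrite -(row1 r1 (Hs i) Rik) col.
Qed.

Lemma bregman_step (T : finType) (R : rel T) :
  (forall i k, noniso R i k -> (per (Rf R i k))%:R <= \prod_j bb (rs (Rf R i k) j)) ->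
  (per R)%:R <= \prod_i bb (rs R i).
Proof.
move=> IH.
have [P0|Ppos] := posnP (per R).
  by rewrite P0 prodr_ge0 // => i _; exact: bb_ge0.
have [s0 s0S] : exists s0, s0 \in Sset R by apply/card_gt0P.
set J := Jset R; set P := per R.
have Hprod : \prod_i bb (rs R i) = \prod_(i in J) bb (rs R i).
  rewrite [LHS](bigID (mem J)) /= [X in _ * X]big1 ?mulr1 // => i iJ.
  by have [-> _] := isoP s0S iJ; rewrite bb1.
rewrite Hprod.
have [J0|Np] := posnP #|J|.
  have J0' : J = set0 by apply/eqP; rewrite -cards_eq0 J0.
  rewrite J0' big_set0.
  have : (P <= 1)%N.
    rewrite /P /per -(cards1 s0); apply: subset_leq_card; apply/subsetP => s sS.
    rewrite inE; apply/eqP/permP => i.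
    have iJ : i \notin J by rewrite J0' inE.
    have [r1 _] := isoP sS iJ.
    move: sS s0S; rewrite !SsetP => /forallP H1 /forallP H2.
    exact: row1 r1 (H1 i) (H2 i).
  by rewrite -(ler_nat algC).
set N := #|J|.
have X0 : 0 <= \prod_(i in J) bb (rs R i) by apply: prodr_ge0 => i _; exact: bb_ge0.
rewrite -(ler_pXn2r (n := (N * P)%N)) ?muln_gt0 ?Np ?Ppos // ?nnegrE ?ler0n //.
apply: (@le_trans _ _ (\prod_(i in J) ((rs R i)%:R ^+ P *
          \prod_(k in [set k | R i k]) (per (Rf R i k))%:R ^+ per (Rf R i k)))).
  rewrite mulnC exprM -prodr_const; apply: ler_prod => i _.
  rewrite exprn_ge0 ?ler0n //=.
  have := @amgm _ [set k | R i k] (fun k => per (Rf R i k)).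
  rewrite -per_sum -(ler_nat algC) natrM !natrX natr_prod.
  by move=> H; apply: (le_trans H); rewrite /rs; under eq_bigr do rewrite natrX.
have -> : \prod_(i in J) ((rs R i)%:R ^+ P *
          \prod_(k in [set k | R i k]) (per (Rf R i k))%:R ^+ per (Rf R i k)) =
          \prod_(s in Sset R) \prod_(i in J) ((rs R i)%:R * (per (Rf R i (s i)))%:R) :> algC.
  rewrite [RHS]exchange_big /=; apply: eq_bigr => i _.
  by rewrite big_split /= prodr_const (@per_prod _ R i (fun k => (per (Rf R i k))%:R)).
apply: (@le_trans _ _ (\prod_(s in Sset R) \prod_(i in J)
          ((rs R i)%:R * \prod_j bb (rs (Rf R i (s i)) j)))).
  apply: ler_prod => s sS; rewrite prodr_ge0 /=; last by move=> i _; rewrite mulr_ge0 ?ler0n.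
  apply: ler_prod => i iJ; rewrite mulr_ge0 ?ler0n //=.
  by rewrite ler_wpM2l ?ler0n // IH // nonisoJ.
rewrite (eq_bigr (fun _ => (\prod_(i in J) bb (rs R i)) ^+ N)); last by move=> s sS; rewrite step4.
by rewrite prodr_const -exprM.
Qed.

Theorem bregman (T : finType) (R : rel T) : (per R)%:R <= \prod_i bb (rs R i).
Proof.
suff H : forall n (R : rel T), (meas R <= n)%N -> (per R)%:R <= \prod_i bb (rs R i).
  exact: H (leqnn _).
elim=> [|n IHn] R' hm; apply: bregman_step => i k nik.
  have := meas_Rf nik; by rewrite ltnNge (leq_trans hm (leq0n _)).
apply: IHn; rewrite -ltnS; exact: leq_trans (meas_Rf nik) hm.
Qed.

Local Close Scope ring_scope.

Definition ffi (T : finType) (f : T -> T) := involutive f /\ forall v, f v != v.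

Definition hh (T : finType) (f g : T -> T) := fun v => g (f v).
Definition key (T : finType) (h : T -> T) (v : T) : nat :=
  enum_rank [arg min_(w < v | fconnect h v w) enum_rank w].
Definition inS (T : finType) (f g : T -> T) v :=
  (key (hh f g) v < key (hh f g) (f v))%N.
Definition sg (T : finType) (f g : T -> T) v := if inS f g v then f v else g v.

Lemma key_eq (T : finType) (h h' : T -> T) v v' :
  fconnect h v =1 fconnect h' v' -> key h v = key h' v'.
Proof.
move=> E; rewrite /key.
case: arg_minnP => [|a Pa Ha]; first exact: connect0.
case: arg_minnP => [|b Pb Hb]; first exact: connect0.
apply/eqP; rewrite eqn_leq Ha ?E // Hb // -E //.
Qed.

Lemma key_mem (T : finType) (h : T -> T) v :
  exists2 a, fconnect h v a & key h v = enum_rank a.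
Proof.
rewrite /key; case: arg_minnP => [|a Pa Ha]; first exact: connect0.
by exists a.
Qed.

Lemma fconnect_iterP (T : finType) (p : T -> T) v w :
  fconnect p v w <-> exists n, iter n p v = w.
Proof.
split => [H|[n <-]]; last exact: fconnect_iter.
by exists (findex p v w); exact: iter_findex.
Qed.

Lemma iter_can (T : Type) (p q : T -> T) n x : cancel p q -> iter n q (iter n p x) = x.
Proof.
move=> pK; elim: n => // n IH; by rewrite iterSr iterS pK.
Qed.

Section Fun.
End Fun.

Lemma hh_inj (T : finType) (f g : T -> T) : ffi f -> ffi g -> injective (hh f g).
Proof. by move=> [fK _] [gK _] x y /(inv_inj gK) /(inv_inj fK). Qed.

Lemma parity (T : finType) (f g : T -> T) v : ffi f -> ffi g -> ~~ fconnect (hh f g) v (f v).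
Proof.
move=> Ff Fg; have [fK f1] := Ff; have [gK g1] := Fg; have hI := hh_inj Ff Fg.
apply/negP => /fconnect_iterP[n].
suff : forall k v, iter k (hh f g) v != f v /\ iter k.+1 (hh f g) v != f v.
  by move=> H; have [/eqP] := H n v.
elim=> [|k IH] u.
  split; first by rewrite /= eq_sym f1.
  by rewrite /= /hh; apply/eqP => /eqP; rewrite (negbTE (g1 _)).
split; first by case: (IH u).
rewrite iterS iterSr; apply/eqP => E.
have E2 : hh f g (f (hh f g u)) = f u by rewrite /hh fK gK.
rewrite -E2 in E; move/hI: E => E.
by case: (IH (hh f g u)) => /eqP; rewrite E.
Qed.

Lemma key_h (T : finType) (f g : T -> T) v : ffi f -> ffi g ->
  key (hh f g) (hh f g v) = key (hh f g) v.
Proof.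
move=> Ff Fg; apply: key_eq => w; by rewrite -same_fconnect1 //; exact: hh_inj.
Qed.

Lemma inS_h (T : finType) (f g : T -> T) v : ffi f -> ffi g ->
  inS f g (hh f g v) = inS f g v.
Proof.
move=> Ff Fg; have [fK _] := Ff; have [gK _] := Fg.
rewrite /inS key_h //; congr (_ < _)%N.
have E : f v = hh f g (f (g (f v))) by rewrite /hh fK gK.
by rewrite [in RHS]E key_h.
Qed.

Lemma key_neq (T : finType) (f g : T -> T) v : ffi f -> ffi g ->
  key (hh f g) v != key (hh f g) (f v).
Proof.
move=> Ff Fg; have hI := hh_inj Ff Fg.
have [a Pa ->] := key_mem (hh f g) v.
have [b Pb ->] := key_mem (hh f g) (f v).
apply/negP => /eqP/val_inj/enum_rank_inj ab; subst b.
move/negP: (parity v Ff Fg); apply; apply: connect_trans Pa _.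
by rewrite fconnect_sym.
Qed.

Lemma inS_f (T : finType) (f g : T -> T) v : ffi f -> ffi g ->
  inS f g (f v) = ~~ inS f g v.
Proof.
move=> Ff Fg; have [fK _] := Ff.
rewrite /inS fK; have := key_neq v Ff Fg.
by case: (ltngtP (key (hh f g) v) (key (hh f g) (f v))).
Qed.

Lemma inS_g (T : finType) (f g : T -> T) v : ffi f -> ffi g ->
  inS f g (g v) = ~~ inS f g v.
Proof.
move=> Ff Fg; have [fK _] := Ff.
have -> : g v = hh f g (f v) by rewrite /hh fK.
by rewrite inS_h // inS_f.
Qed.

Lemma sg_inj (T : finType) (f g : T -> T) : ffi f -> ffi g -> injective (sg f g).
Proof.
move=> Ff Fg; have [fK _] := Ff; have [gK _] := Fg.
move=> v w; rewrite /sg.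
case Sv: (inS f g v); case Sw: (inS f g w) => E.
- exact: (inv_inj fK).
- by move: (inS_f v Ff Fg) (inS_g w Ff Fg); rewrite E Sv Sw => -> .
- by move: (inS_g v Ff Fg) (inS_f w Ff Fg); rewrite E Sv Sw => -> .
- exact: (inv_inj gK).
Qed.

Lemma sg2_orbit (T : finType) (f g : T -> T) v : ffi f -> ffi g ->
  fconnect (fun x => sg f g (sg f g x)) v =1 fconnect (hh f g) v.
Proof.
move=> Ff Fg; have [fK _] := Ff; have [gK _] := Fg; have hI := hh_inj Ff Fg.
move=> w; case Sv: (inS f g v).
  have It : forall n, iter n (fun x => sg f g (sg f g x)) v = iter n (hh f g) v /\
                      inS f g (iter n (hh f g) v).
    elim=> [|n [IH1 IH2]] //=; rewrite IH1; split; last by rewrite inS_h.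
    have -> : sg f g (iter n (hh f g) v) = f (iter n (hh f g) v) by rewrite /sg IH2.
    by rewrite /sg inS_f // IH2.
  apply/idP/idP => /fconnect_iterP[n <-]; apply/fconnect_iterP; exists n; by case: (It n).
have It : forall n, iter n (fun x => sg f g (sg f g x)) v = iter n (fun x => f (g x)) v /\
                    ~~ inS f g (iter n (fun x => f (g x)) v).
  elim=> [|n [IH1 IH2]] /=; first by rewrite Sv.
  rewrite IH1.
  have -> : sg f g (iter n (fun x => f (g x)) v) = g (iter n (fun x => f (g x)) v)
    by rewrite /sg (negbTE IH2).
  rewrite /sg inS_g // IH2; split => //.
  by rewrite inS_f // inS_g // IH2.
have hK : cancel (hh f g) (fun x => f (g x)) by move=> x; rewrite /hh gK fK.
have hK' : cancel (fun x => f (g x)) (hh f g) by move=> x; rewrite /hh fK gK.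
rewrite [RHS](fconnect_sym hI); apply/idP/idP.
  move=> /fconnect_iterP[n]; case: (It n) => -> _ <-.
  by apply/fconnect_iterP; exists n; rewrite iter_can.
move=> /fconnect_iterP[n Hn]; apply/fconnect_iterP; exists n.
by case: (It n) => -> _; rewrite -Hn iter_can.
Qed.

Definition inS' (T : finType) (s : T -> T) v :=
  (key (fun x => s (s x)) v < key (fun x => s (s x)) (s v))%N.

Lemma inS'_eq (T : finType) (f g : T -> T) (s : T -> T) v : ffi f -> ffi g ->
  s =1 sg f g -> inS' s v = inS f g v.
Proof.
move=> Ff Fg; have [fK _] := Ff; have [gK _] := Fg => sE.
have K : forall u, key (fun x => s (s x)) u = key (hh f g) u.
  move=> u; apply: key_eq => w.
  rewrite (@eq_fconnect _ _ (fun x => sg f g (sg f g x))); last by move=> x; rewrite !sE.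
  exact: sg2_orbit.
rewrite /inS' /inS !K sE; congr (_ < _)%N.
rewrite /sg; case: (inS f g v) => //.
have -> : g v = hh f g (f v) by rewrite /hh fK.
exact: key_h.
Qed.

Lemma recover (T : finType) (f g : T -> T) (s : {perm T}) : ffi f -> ffi g ->
  s =1 sg f g ->
  (forall v, f v = if inS' s v then s v else (s^-1)%g v) /\
  (forall v, g v = if inS' s v then (s^-1)%g v else s v).
Proof.
move=> Ff Fg sE; have [fK _] := Ff; have [gK _] := Fg.
split=> v; rewrite (inS'_eq v Ff Fg sE); case Sv: (inS f g v).
- by rewrite sE /sg Sv.
- by symmetry; apply: (canLR (permK s)); rewrite sE /sg inS_f // Sv /= fK.
- by symmetry; apply: (canLR (permK s)); rewrite sE /sg inS_g // Sv /= gK.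
- by rewrite sE /sg Sv.
Qed.

Definition partner (T : finType) (M : {set {set T}}) v :=
  odflt v [pick y in pblock M v | y != v].

Lemma partner_of (T : finType) (M : {set {set T}}) u x y :
  pblock M u = [set x; y] -> x != y -> u \in [set x; y] ->
  partner M u = if u == x then y else x.
Proof.
move=> Bu xy uB; rewrite /partner Bu.
have yx : (y == x) = false by rewrite eq_sym (negbTE xy).
case: pickP => [z /andP[zB zu]|none] /=.
  move: uB zB zu; rewrite !inE.
  by case/orP=> /eqP ->; case/orP=> /eqP ->; rewrite ?eqxx ?yx.
have := none (if u == x then y else x); rewrite !inE.
move: uB; rewrite !inE; case/orP=> /eqP ->; by rewrite ?eqxx ?yx ?(negbTE xy) ?orbT /= ?eqxx.
Qed.

Lemma partnerP (T : finType) (e : rel T) M : simple_graph e -> perfect_matching e M -> forall v,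
  [/\ e v (partner M v), partner M (partner M v) = v & pblock M v = [set v; partner M v]].
Proof.
move=> [esym eirr] /andP[/and3P[/eqP cov triv n0] /forallP Hb] v.
have vc : v \in cover M by rewrite cov inE.
have BM := pblock_mem vc.
have vB : v \in pblock M v by rewrite mem_pblock.
move: (Hb (pblock M v)); rewrite BM /= => /existsP[x /existsP[y /andP[exy /eqP Bxy]]].
have xy : x != y by apply/eqP => E; rewrite E eirr in exy.
rewrite Bxy in vB.
have pv := partner_of Bxy xy vB.
set o := if v == x then y else x.
have oB : o \in [set x; y] by rewrite /o; case: ifP; rewrite !inE eqxx ?orbT.
have Bo : pblock M o = [set x; y] by rewrite -Bxy; apply: def_pblock; rewrite // Bxy.
rewrite pv (partner_of Bo xy oB) /o.
have yx : (y == x) = false by rewrite eq_sym (negbTE xy).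
move: vB; rewrite !inE; case/orP => /eqP vE; subst v; rewrite ?eqxx ?yx.
  by [].
by rewrite esym Bxy setUC eqxx.
Qed.

Lemma pm_ffi (T : finType) (e : rel T) M : simple_graph e -> perfect_matching e M ->
  ffi (partner M).
Proof.
move=> G PM; split=> v; first by have [] := partnerP G PM v.
have [evp _ _] := partnerP G PM v; apply/eqP => E; rewrite E in evp.
by case: G => _ irr; rewrite irr in evp.
Qed.

Lemma pm_repr (T : finType) (e : rel T) M : simple_graph e -> perfect_matching e M ->
  M = [set [set v; partner M v] | v : T].
Proof.
move=> G PM; have PM' := PM; move: PM' => /andP[/and3P[/eqP cov triv n0] _].
apply/setP => B; apply/idP/imsetP => [BM|[v _ ->]].
  have : B != set0 by apply: contraNneq n0 => <-.
  case/set0Pn => x xB; exists x => //.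
  have [_ _ <-] := partnerP G PM x; apply/esym; exact: def_pblock.
have [_ _ <-] := partnerP G PM v; apply: pblock_mem; by rewrite cov inE.
Qed.

Definition Phi (T : finType) (p : {set {set T}} * {set {set T}}) : {perm T} :=
  odflt 1%g [pick s : {perm T} | [forall v, s v == sg (partner p.1) (partner p.2) v]].

Lemma PhiE (T : finType) (p : {set {set T}} * {set {set T}}) :
  ffi (partner p.1) -> ffi (partner p.2) -> Phi p =1 sg (partner p.1) (partner p.2).
Proof.
move=> F1 F2; rewrite /Phi; case: pickP => [s /forallP H v|none] /=; first exact/eqP.
have := none (perm (sg_inj F1 F2)); move/negbT/forallPn => [v].
by rewrite permE eqxx.
Qed.

Lemma perfmat_sq (T : finType) (e : rel T) : simple_graph e -> (perfmat e ^ 2 <= per e)%N.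
Proof.
move=> G; set PMs := [set M : {set {set T}} | perfect_matching e M].
rewrite /perfmat -mulnn -/PMs -cardsX -(card_in_imset (f := @Phi T)).
  apply: subset_leq_card; apply/subsetP => s /imsetP[p]; rewrite inE => /andP[p1 p2] ->.
  rewrite inE in p1; rewrite inE in p2.
  have F1 := pm_ffi G p1; have F2 := pm_ffi G p2.
  rewrite SsetP; apply/forallP => v; rewrite PhiE // /sg.
  have [e1 _ _] := partnerP G p1 v; have [e2 _ _] := partnerP G p2 v.
  by case: ifP.
move=> [M1 M2] [N1 N2]; rewrite !inE /= => /andP[m1 m2] /andP[n1 n2] E.
have [R1 R2] := recover (pm_ffi G m1) (pm_ffi G m2) (PhiE (p := (M1, M2)) (pm_ffi G m1) (pm_ffi G m2)).
have [S1 S2] := recover (pm_ffi G n1) (pm_ffi G n2) (PhiE (p := (N1, N2)) (pm_ffi G n1) (pm_ffi G n2)).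
rewrite E in R1 R2.
rewrite (pm_repr G m1) (pm_repr G m2) (pm_repr G n1) (pm_repr G n2).
congr (_, _); apply: eq_imset => v; by rewrite ?R1 ?S1 ?R2 ?S2.
Qed.

Unset Implicit Arguments.
Local Open Scope ring_scope.

Lemma bf2 d : bregman_factor d ^+ 2 = bb d.
Proof.
rewrite /bregman_factor /bb; case: eqP => [_|/eqP d0]; first by rewrite expr0n.
rewrite -lt0n in d0.
set x : algC := (d`!)%:R.
have d2 : (0 < d.*2)%N by rewrite double_gt0.
set y := (d.*2).-root x.
have y0 : 0 <= y by rewrite rootC_ge0 // ler0n.
have -> : x = (y ^+ 2) ^+ d by rewrite -exprM mul2n rootCK.
by rewrite exprCK // exprn_ge0.
Qed.

Theorem theorem4p1 (T : finType) (e : rel T) :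
  simple_graph e -> ~~ odd #|T| ->
  (perfmat e)%:R <= \prod_(v : T) bregman_factor (deg e v).
Proof.
move=> G _.
have H1 := perfmat_sq G.
have H2 := bregman e.
rewrite -(ler_pXn2r (n := 2)) // ?nnegrE ?ler0n ?prodr_ge0 //; last first.
  move=> v _; rewrite /bregman_factor; case: eqP => // /eqP d0.
  by rewrite rootC_ge0 ?ler0n // double_gt0 lt0n.
rewrite -(@prodrXl algC 2) (eq_bigr (fun v => bb (rs e v))); last by move=> v _; rewrite bf2.
apply: le_trans H2; by rewrite -natrX ler_nat.
Qed.
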